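(* Let $N\ge1$ and let $\mathsf{G}=\begin{bmatrix}-\frac13&\frac23&\frac23\\\frac23&-\frac13&\frac23\\\frac23&\frac23&-\frac13\end{bmatrix}$ be the Grover coin. Then the walk operator $U=S(\mathsf{G}\otimes I_2\otimes I_N)$ described in the context is aperiodic, i.e. there is no $\tau\in\mathbb{N}$ with $U^\tau=I_{6N}$.
   Context: Canonical bases $\{\ket{l}_3\},\{\ket{s}_2\},\{\ket{r}_N\}$ of $\mathbb{C}^3,\mathbb{C}^2,\mathbb{C}^N$ ($r$ mod $N$). This is the three-state walk on the Cayley graph of the dihedral group $D_N$ with generators $\{a,b\}$, with shift operator $S=\sum_{r=0}^{N-1}\big[\ket{0}_3\bra{0}_3\otimes\ket{0}_2\bra{0}_2\otimes\ket{r}_N\bra{r-1}_N+\ket{0}_3\bra{0}_3\otimes\ket{1}_2\bra{1}_2\otimes\ket{r}_N\bra{r+1}_N+\ket{1}_3\bra{1}_3\otimes I_2\otimes\ket{r}_N\bra{r}_N+\ket{2}_3\bra{2}_3\otimes(\ket{0}_2\bra{1}_2+\ket{1}_2\bra{0}_2)\otimes\ket{r}_N\bra{r}_N\big]$. *)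

(* Defs.v *)
From mathcomp Require Import all_boot all_order all_algebra.
From mathcomp Require Import mxtens.
Set Implicit Arguments. Unset Strict Implicit. Unset Printing Implicit Defensive.
Import GRing.Theory Num.Theory.
Local Open Scope ring_scope.

Section Walk.
Variable C : numClosedFieldType.   (* the complex numbers (any model) *)

Definition i3_0 : 'I_3 := @Ordinal 3 0 isT.
Definition i3_1 : 'I_3 := @Ordinal 3 1 isT.
Definition i3_2 : 'I_3 := @Ordinal 3 2 isT.
Definition i2_0 : 'I_2 := @Ordinal 2 0 isT.
Definition i2_1 : 'I_2 := @Ordinal 2 1 isT.

Definition ketbra n (i j : 'I_n) : 'M[C]_n := delta_mx i j.

Definition shift_fwd N : 'M[C]_N :=
  \matrix_(i, j) ((nat_of_ord i == (nat_of_ord j).+1 %% N)%N)%:R.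
Definition shift_bwd N : 'M[C]_N :=
  \matrix_(i, j) ((nat_of_ord j == (nat_of_ord i).+1 %% N)%N)%:R.

(* Kronecker product A (x) B (x) D, index of |l>|s>|r> is (l*2 + s)*N + r *)
Definition tens3 {a b c} (A : 'M[C]_a) (B : 'M[C]_b) (D : 'M[C]_c)
  : 'M[C]_(a * b * c) := tensmx (tensmx A B) D.

Definition shiftS N : 'M[C]_(3 * 2 * N) :=
    tens3 (ketbra i3_0 i3_0) (ketbra i2_0 i2_0) (shift_fwd N)
  + tens3 (ketbra i3_0 i3_0) (ketbra i2_1 i2_1) (shift_bwd N)
  + tens3 (ketbra i3_1 i3_1) 1%:M 1%:M
  + tens3 (ketbra i3_2 i3_2) (ketbra i2_0 i2_1 + ketbra i2_1 i2_0) 1%:M.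

Definition grover : 'M[C]_3 :=
  \matrix_(i, j) (if i == j then - (1 / 3%:R) else 2%:R / 3%:R).

Definition walkU N : 'M[C]_(3 * 2 * N) :=
  shiftS N *m tens3 grover 1%:M 1%:M.

Definition mxpow n (M : 'M[C]_n) (k : nat) : 'M[C]_n := iter k (mulmx M) 1%:M.

End Walk.

(* Main.v *)
Require Import Defs.
From mathcomp Require Import all_boot all_order all_algebra mxtens.
From mathcomp Require Import zify ring lra.
Set Implicit Arguments. Unset Strict Implicit. Unset Printing Implicit Defensive.
Import GRing.Theory Num.Theory.
Local Open Scope ring_scope.

Section Aux.
Variable C : numClosedFieldType.

Lemma tensmxDl m n p q (A B : 'M[C]_(m,n)) (D : 'M[C]_(p,q)) :
  tensmx (A + B) D = tensmx A D + tensmx B D.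
Proof. by apply/matrixP=> i j; rewrite !mxE mulrDl. Qed.
Lemma tensmxDr m n p q (A : 'M[C]_(m,n)) (B D : 'M[C]_(p,q)) :
  tensmx A (B + D) = tensmx A B + tensmx A D.
Proof. by apply/matrixP=> i j; rewrite !mxE mulrDr. Qed.
Lemma tensmxNl m n p q (A : 'M[C]_(m,n)) (D : 'M[C]_(p,q)) :
  tensmx (- A) D = - tensmx A D.
Proof. by apply/matrixP=> i j; rewrite !mxE mulNr. Qed.
Lemma tensmxNr m n p q (A : 'M[C]_(m,n)) (D : 'M[C]_(p,q)) :
  tensmx A (- D) = - tensmx A D.
Proof. by apply/matrixP=> i j; rewrite !mxE mulrN. Qed.

Lemma tens3_mul a b c a' b' c' (A : 'M[C]_a) (B : 'M[C]_b) (D : 'M[C]_c)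
   (x : 'M[C]_(a,a')) (y : 'M[C]_(b,b')) (z : 'M[C]_(c,c')) :
  tens3 A B D *m tensmx (tensmx x y) z = tensmx (tensmx (A *m x) (B *m y)) (D *m z).
Proof. by rewrite /tens3 !tensmx_mul. Qed.

Definition avec : 'cV[C]_2 := \col_i (if i == i2_0 then 1 else -1).
Definition ones N : 'cV[C]_N := const_mx 1.

Lemma fwd_ones N : shift_fwd C N *m ones N = ones N.
Proof.
apply/matrixP=> i k; rewrite !mxE.
have iN : (i < N)%N := ltn_ord i.
have N0 : (0 < N)%N by lia.
pose j0 : 'I_N := Ordinal (ltn_pmod (i + N - 1) N0).
rewrite (bigD1 j0) //= big1 ?addr0.
  rewrite !mxE mulr1; suff -> : (nat_of_ord i == (j0.+1 %% N))%N by [].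
  rewrite /= -addn1 modnDml addn1.
  have -> : ((i + N - 1).+1 = N + i)%N by lia.
  by rewrite modnDl modn_small.
move=> j /negbTE hj; rewrite !mxE mulr1.
case: eqP => // hi; exfalso; move: hj => /negP; apply; apply/eqP/val_inj => /=.
rewrite hi.
have jN : (j < N)%N := ltn_ord j.
case: (ltnP j.+1 N) => hj1.
  rewrite (modn_small hj1). have -> : (j.+1 + N - 1 = N + j)%N by lia.
  by rewrite modnDl modn_small.
have -> : (j.+1 = N)%N by lia. rewrite modnn add0n.
by rewrite modn_small; lia.
Qed.


Lemma bwd_ones N : shift_bwd C N *m ones N = ones N.
Proof.
apply/matrixP=> i k; rewrite !mxE.
have iN : (i < N)%N := ltn_ord i.
have N0 : (0 < N)%N by lia.
pose j0 : 'I_N := Ordinal (ltn_pmod i.+1 N0).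
rewrite (bigD1 j0) //= big1 ?addr0; first by rewrite !mxE mulr1 eqxx.
move=> j /negbTE hj; rewrite !mxE mulr1.
case: eqP => // hi; exfalso; move: hj => /negP; apply; apply/eqP/val_inj => /=.
by rewrite hi.
Qed.

Definition Xv N (w : 'cV[C]_3) := tensmx (tensmx w avec) (ones N).
Definition Dm : 'M[C]_3 := ketbra C i3_0 i3_0 + ketbra C i3_1 i3_1 - ketbra C i3_2 i3_2.
Definition Mm : 'M[C]_3 := Dm *m grover C.

Lemma a_sum : ketbra C i2_0 i2_0 *m avec + ketbra C i2_1 i2_1 *m avec = avec.
Proof.
apply/matrixP=> i j; rewrite !mxE !big_ord_recr big_ord0 /= !mxE.
case: i => [[|[|n]] hi] //=; rewrite ?ord1 /=; rewrite ?big_ord0; ring.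
Qed.

Lemma a_swap : (ketbra C i2_0 i2_1 + ketbra C i2_1 i2_0) *m avec = - avec.
Proof.
apply/matrixP=> i j; rewrite !mxE !big_ord_recr big_ord0 /= !mxE.
case: i => [[|[|n]] hi] //=; rewrite ?ord1 /=; rewrite ?big_ord0; ring.
Qed.

Lemma stepU N (w : 'cV[C]_3) : walkU C N *m Xv N w = Xv N (Mm *m w).
Proof.
rewrite /walkU -mulmxA /Xv tens3_mul !mul1mx.
rewrite /shiftS !mulmxDl !tens3_mul !mul1mx fwd_ones bwd_ones a_swap.
rewrite -tensmxDl -tensmxDr a_sum tensmxNr -tensmxNl -!tensmxDl.
by rewrite /Mm /Dm !mulmxBl !mulmxDl !mulmxA.
Qed.


Lemma powU N k w : mxpow (walkU C N) k *m Xv N w = Xv N (iter k (mulmx Mm) w).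
Proof.
elim: k => [|k IH]; first by rewrite /mxpow /= mul1mx.
by rewrite /mxpow iterS -mulmxA -/(mxpow _ _) IH stepU.
Qed.

Lemma Xv_entry N (hN : (0 < N)%N) (v : 'cV[C]_3) l :
  Xv N v (mxtens_index (mxtens_index (l, i2_0), Ordinal hN))
         (mxtens_index (mxtens_index (ord0, ord0), ord0)) = v l ord0.
Proof. by rewrite /Xv !tensmxE !mxE /= mulr1 mulr1. Qed.

Definition Ai : 'M[int]_3 :=
  \matrix_(i, j) (let g : int := if i == j then -1 else 2 in
                  if i == i3_2 then - g else g).
Definition wi : 'cV[int]_3 := \col_i (i == i3_0)%:R.

Lemma Ai_Mm : map_mx intr Ai = 3%:R *: Mm.
Proof.
apply/matrixP=> i j; rewrite !mxE /Mm /Dm.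
rewrite ?mxE !big_ord_recr big_ord0 /= ?mxE.
case: i => [[|[|[|n]]] hi] //=; case: j => [[|[|[|m]]] hj] //=.
all: have h3 : (3:C) != 0 by rewrite pnatr_eq0.
all: by field.
Qed.


Lemma iter_int k :
  (3%:R ^+ k) *: iter k (mulmx Mm) (map_mx intr wi) = map_mx intr (iter k (mulmx Ai) wi).
Proof.
elim: k => [|k IH]; first by rewrite /= scale1r.
rewrite !iterS map_mxM -IH Ai_Mm -scalemxAl -scalemxAr scalerA exprS.
by rewrite [3%:R * _]mulrC.
Qed.

End Aux.

Lemma sum3E (R : nmodType) (F : 'I_3 -> R) : \sum_i F i = F i3_0 + F i3_1 + F i3_2.
Proof.
rewrite !big_ord_recr big_ord0 /= add0r.
by congr (F _ + F _ + F _); apply/val_inj.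
Qed.

Definition sum3 (v : 'cV[int]_3) : int := v i3_0 ord0 + v i3_1 ord0 + v i3_2 ord0.

Lemma sum3_step v : sum3 (Ai *m v) = 2 * sum3 v - 3 * (v i3_0 ord0 + v i3_1 ord0 - v i3_2 ord0).
Proof.
rewrite /sum3 !mxE !sum3E !mxE /=. ring.
Qed.

Lemma sum3_inv k : exists q : int,
  sum3 (iter k (mulmx Ai) wi) = 3 * q + 1 \/ sum3 (iter k (mulmx Ai) wi) = 3 * q + 2.
Proof.
elim: k => [|k [q IH]].
  by exists 0; left; rewrite /= /sum3 !mxE.
rewrite iterS sum3_step.
set t := (_ + _ - _).
case: IH => ->.
  by exists (2 * q - t); right; ring.
by exists (2 * q + 1 - t); left; ring.
Qed.

Theorem corollary3p5 (C : numClosedFieldType) (N : nat) (hN : (1 <= N)%N) :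
  ~ (exists tau : nat, (0 < tau)%N /\ mxpow (walkU C N) tau = 1%:M).
Proof.
move=> [k [k0 hk]].
have := @powU C N k (map_mx intr wi).
rewrite hk mul1mx => hX.
have he l : iter k (mulmx (Mm C)) (map_mx intr wi) l ord0 = (map_mx intr wi : 'cV[C]_3) l ord0.
  by rewrite -(Xv_entry hN) hX Xv_entry.
have hi l : iter k (mulmx Ai) wi l ord0 = (3 ^+ k) * wi l ord0.
  apply/(@intr_inj C).
  have h := congr1 (fun M : 'cV[C]_3 => M l ord0) (@iter_int C k).
  move: h => /=; rewrite mxE he !mxE => <-.
  by rewrite rmorphM rmorphXn.
have [q hq] := sum3_inv k.
move: hq; rewrite /sum3 !hi /wi !mxE /=.
case: k k0 {hk hX he hi} => // k _.
rewrite exprS; set p := (3 ^+ k).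
lia.
Qed.
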